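(* For every deterministic one-counter automaton $\mathcal{A}$ over a finite alphabet $\Sigma$, one can construct a visibly-pushdown automaton $\tilde{\mathcal{A}}$ over the pushdown alphabet $\tilde\Sigma:=(\Sigma\times\{c\},\ (\Sigma\times\{i\})\cup\{\mathtt{x}\},\ \Sigma\times\{r\})$, where $\mathtt{x}$ is a fresh internal letter, such that every word in $L(\tilde{\mathcal{A}})$ is of the form $\tilde a_1\mathtt{x}\tilde a_2\mathtt{x}\cdots\mathtt{x}\tilde a_n$ with $\tilde a_1,\dots,\tilde a_n\in\Sigma\times\{c,i,r\}$, and $$L(\mathcal{A})=\{\pi_1(\tilde a_1\cdots\tilde a_n)\mid \tilde a_1\mathtt{x}\cdots\mathtt{x}\tilde a_n\in L(\tilde{\mathcal{A}})\}.$$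
   Context: A deterministic one-counter automaton is a deterministic pushdown automaton whose stack alphabet has a single letter besides the bottom-of-stack symbol. A pushdown alphabet is an alphabet partitioned into call, internal and return letters $(\Sigma_c,\Sigma_i,\Sigma_r)$. A visibly-pushdown automaton (VPA) $(Q,I,F,\Gamma,\delta)$ over it has states $Q$, initial states $I$, final states $F$, stack alphabet $\Gamma$ containing a bottom symbol $\lhd$, and transitions of types $Q\times\Sigma_c\times Q\times(\Gamma\setminus\{\lhd\})$ (push), $Q\times\Sigma_r\times\Gamma\times Q$ (pop, where popping at $\lhd$ leaves the stack $\lhd$), and $Q\times\Sigma_i\times Q$ (stack unchanged); acceptance is by reaching a final state from an initial state with stack $\lhd$. For a word $\tilde a_1\cdots\tilde a_n$ over $\Sigma\times\{c,i,r\}$, its projection $\pi_1(\tilde a_1\cdots\tilde a_n)$ is the word in $\Sigma^*$ obtained by taking the first coordinate of every letter. *)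

(* Defs.v *)
From HB Require Import structures.
From mathcomp Require Import all_boot.
Set Implicit Arguments. Unset Strict Implicit. Unset Printing Implicit Defensive.

Inductive kind := Kc | Ki | Kr.

Definition kind_to (k : kind) : 'I_3 :=
  match k with Kc => inord 0 | Ki => inord 1 | Kr => inord 2 end.
Definition kind_of (i : 'I_3) : kind :=
  match val i with 0 => Kc | 1 => Ki | _ => Kr end.
Lemma kind_toK : cancel kind_to kind_of.
Proof. by case; rewrite /kind_of /= inordK. Qed.
HB.instance Definition _ := Finite.copy kind (can_type kind_toK).

(* A pushdown automaton (Q, I, F, Gamma, delta) over alphabet A, with the
   transition shapes of the paper: push  Q x A x Q x (Gamma \ {bot}),
   pop  Q x A x Gamma x Q, internal  Q x A x Q. *)
Record PDA (A : Type) := {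
  Q : finType;
  init : pred Q;
  fin : pred Q;
  Gam : finType;
  bot : Gam;
  push : Q -> A -> Q -> Gam -> bool;
  pop  : Q -> A -> Gam -> Q -> bool;
  intr : Q -> A -> Q -> bool
}.
Arguments Q {A} P : rename.
Arguments init {A} P _ : rename.
Arguments fin {A} P _ : rename.
Arguments Gam {A} P : rename.
Arguments bot {A} P : rename.
Arguments push {A} P _ _ _ _ : rename.
Arguments pop {A} P _ _ _ _ : rename.
Arguments intr {A} P _ _ _ : rename.

(* configuration: state and stack content above the bottom symbol, top first *)
Definition cfg A (P : PDA A) := (Q P * seq (Gam P))%type.

(* one step reading letter a; [ok a k] says whether a transition of kind k may
   be used on letter a (always true for ordinary PDA, visibility for VPA). *)
Definition pstep A (P : PDA A) (ok : A -> kind -> bool)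
    (c : cfg P) (a : A) (c' : cfg P) : Prop :=
  (ok a Kc /\ exists g, g != bot P /\ push P c.1 a c'.1 g /\ c'.2 = g :: c.2)
  \/ (ok a Kr /\ exists g, pop P c.1 a g c'.1 /\
        match c.2 with
        | [::] => g = bot P /\ c'.2 = [::]      (* popping at bot leaves bot *)
        | g' :: s => g = g' /\ c'.2 = s
        end)
  \/ (ok a Ki /\ intr P c.1 a c'.1 /\ c'.2 = c.2).

Fixpoint reach A (P : PDA A) ok (c : cfg P) (w : seq A) (c' : cfg P) : Prop :=
  match w with
  | [::] => c = c'
  | a :: w' => exists c1, pstep ok c a c1 /\ reach ok c1 w' c'
  end.

Definition accepts A (P : PDA A) ok (w : seq A) : Prop :=
  exists q0 q s, init P q0 /\ fin P q /\ reach ok (q0, [::]) w (q, s).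

Definition pda_lang A (P : PDA A) (w : seq A) : Prop :=
  accepts P (fun _ _ => true) w.

Definition deterministic A (P : PDA A) : Prop :=
  #|[pred q | init P q]| = 1 /\
  forall (q : Q P) (a : A) (g : Gam P),
    #|[pred x : Q P * Gam P | push P q a x.1 x.2 && (x.2 != bot P)]|
    + #|[pred q' | pop P q a g q']| + #|[pred q' | intr P q a q']| <= 1.

(* deterministic one-counter automaton: deterministic PDA whose stack
   alphabet has a single letter besides bot *)
Definition is_DOCA A (P : PDA A) : Prop := deterministic P /\ #|Gam P| = 2.

(* The pushdown alphabet tilde Sigma: Some (a, k) is (a,k) in Sigma x {c,i,r},
   None is the fresh internal letter x. *)
Definition tsym (Sigma : finType) := option (Sigma * kind).
Definition tkind (Sigma : finType) (t : tsym Sigma) : kind :=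
  if t is Some (_, k) then k else Ki.

Definition vpa_lang (Sigma : finType) (V : PDA (tsym Sigma)) (w : seq (tsym Sigma)) : Prop :=
  accepts V (fun t k => tkind t == k) w.

Definition interleave (Sigma : finType) (ts : seq (Sigma * kind)) : seq (tsym Sigma) :=
  match ts with
  | [::] => [::]
  | t :: ts' => Some t :: flatten [seq [:: None; Some t'] | t' <- ts']
  end.

(* Main.v *)
Require Import Defs.
From mathcomp Require Import all_boot.
Set Implicit Arguments. Unset Strict Implicit. Unset Printing Implicit Defensive.

Definition keqb (a b : kind) : bool :=
  match a, b with Kc, Kc | Ki, Ki | Kr, Kr => true | _, _ => false end.
Lemma keqE (a b : kind) : (a == b) = keqb a b.
Proof. by apply/eqP/idP; case: a; case: b. Qed.

Section Cons.
Variables (Sigma : finType) (A : PDA Sigma).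

Definition QV : finType := (Q A * option bool)%type.

Definition pushV (x : QV) (t : tsym Sigma) (y : QV) (g : Gam A) : bool :=
  match t with Some (a, Kc) => (x.2 != Some true) && (y.2 == Some true) && push A x.1 a y.1 g
  | _ => false end.
Definition popV (x : QV) (t : tsym Sigma) (g : Gam A) (y : QV) : bool :=
  match t with Some (a, Kr) => (x.2 != Some true) && (y.2 == Some true) && pop A x.1 a g y.1
  | _ => false end.
Definition intrV (x : QV) (t : tsym Sigma) (y : QV) : bool :=
  match t with Some (a, Ki) => (x.2 != Some true) && (y.2 == Some true) && intr A x.1 a y.1
  | None => (x.2 == Some true) && (y.2 == Some false) && (y.1 == x.1)
  | _ => false end.

Definition VA : PDA (tsym Sigma) :=
  @Build_PDA (tsym Sigma) QV (fun x => init A x.1 && (x.2 == None))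
    (fun x => fin A x.1 && (x.2 != Some false)) (Gam A) (bot A) pushV popV intrV.

Definition okV := fun (t : tsym Sigma) k => tkind t == k.
Definition okK (k : kind) := fun (_ : Sigma) k' => k' == k.

Lemma stepV_letter q f s a k q' f' s' :
  @pstep _ VA okV ((q, f), s) (Some (a, k)) ((q', f'), s') <->
  f != Some true /\ f' = Some true /\ @pstep _ A (okK k) (q, s) a (q', s').
Proof.
rewrite /pstep /okV /okK /= !keqE; case: k => /=; split.
- case=> [[_ [g [gb [H e]]]]|[[//]|[//]]].
  move: H => /andP[/andP[H1 /eqP H2] H3].
  by split=> //; split=> //; left; split=> //; exists g.
- case=> H1 [H2 [[_ [g [gb [H3 e]]]]|[[//]|[//]]]].
  by left; split=> //; exists g; rewrite /= H1 H2 eqxx H3.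
- case=> [[//]|[[//]|[_ [/andP[/andP[H1 /eqP H2] H3] e]]]].
  by do 2 split=> //; right; right.
- case=> H1 [H2 [[//]|[[//]|[_ [H3 e]]]]].
  by right; right; rewrite /= H1 H2 eqxx H3.
- case=> [[//]|[[_ [g [/andP[/andP[H1 /eqP H2] H3] e]]]|[//]]].
  by do 2 split=> //; right; left; split=> //; exists g.
- case=> H1 [H2 [[//]|[[_ [g [H3 e]]]|[//]]]].
  by right; left; split=> //; exists g; rewrite /= H1 H2 eqxx H3.
Qed.

Lemma stepV_x q f s q' f' s' :
  @pstep _ VA okV ((q, f), s) None ((q', f'), s') <->
  f = Some true /\ f' = Some false /\ q' = q /\ s' = s.
Proof.
rewrite /pstep /okV /= !keqE; split.
- case=> [[//]|[[//]|[_ [/andP[/andP[/eqP H1 /eqP H2] /eqP H3] /= e]]]].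
  by [].
- case=> -> [-> [-> ->]]; right; right; by rewrite /= !eqxx.
Qed.

Lemma stepA c a c' :
  @pstep _ A (fun _ _ => true) c a c' <-> exists k, pstep (okK k) c a c'.
Proof.
rewrite /pstep /okK; split.
- case=> [[_ H]|[[_ H]|[_ H]]]; [exists Kc|exists Kr|exists Ki]; auto.
- case=> k [[_ H]|[[_ H]|[_ H]]]; auto.
Qed.

Fixpoint reachK (c : cfg A) (ts : seq (Sigma * kind)) (c' : cfg A) : Prop :=
  match ts with
  | [::] => c = c'
  | t :: ts' => exists c1, pstep (okK t.2) c t.1 c1 /\ reachK c1 ts' c'
  end.

Lemma reachA c u c' :
  reach (fun _ _ => true) c u c' <-> exists ts, u = [seq t.1 | t <- ts] /\ reachK c ts c'.
Proof.
elim: u c => [|a u IH] c /=.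
- split; first by move=> ->; exists [::].
  by case=> [[|??]] [].
- split.
  + case=> c1 [/stepA [k Hs] /IH [ts [-> Hr]]].
    by exists ((a, k) :: ts); split=> //; exists c1.
  + case=> [[|[b k] ts]] [//] [-> E] [c1 [Hs Hr]].
    exists c1; split; first by apply/stepA; exists k.
    by apply/(IH c1); exists ts.
Qed.

Definition flat (ts : seq (Sigma * kind)) : seq (tsym Sigma) :=
  flatten [seq [:: None; Some t'] | t' <- ts].

Lemma reachV_flat ts q s c' :
  @reach _ VA okV ((q, Some true), s) (flat ts) c' <->
  exists q' s', c' = ((q', Some true), s') /\ reachK (q, s) ts (q', s').
Proof.
elim: ts q s => [|[a k] ts IH] q s /=.
- split; first by move=> <-; exists q, s.
  by case=> q' [s' [-> [-> ->]]].
- split.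
  + case=> [[[q1 f1] s1]] [/stepV_x [_ [-> [-> ->]]]].
    case=> [[[q2 f2] s2]] [/stepV_letter [_ [-> Hs]]] /(IH q2 s2) [q' [s' [-> Hr]]].
    by exists q', s'; split=> //; exists (q2, s2).
  + case=> q' [s' [E [[q2 s2] [Hs Hr]]]].
    exists ((q, Some false), s); split; first by apply/stepV_x.
    exists ((q2, Some true), s2); split; first by apply/stepV_letter.
    by apply/(IH q2 s2); exists q', s'.
Qed.

Lemma reachV_inter t ts q f s c' : f != Some true ->
  @reach _ VA okV ((q, f), s) (interleave (t :: ts)) c' <->
  exists q' s', c' = ((q', Some true), s') /\ reachK (q, s) (t :: ts) (q', s').
Proof.
move=> hf; case: t => a k /=; split.
- case=> [[[q2 f2] s2]] [/stepV_letter [_ [-> Hs]]] /reachV_flat [q' [s' [-> Hr]]].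
  by exists q', s'; split=> //; exists (q2, s2).
- case=> q' [s' [-> [[q2 s2] [Hs Hr]]]].
  exists ((q2, Some true), s2); split; first by apply/stepV_letter.
  by apply/reachV_flat; exists q', s'.
Qed.

Lemma shape w : forall q f s q' f' s',
  @reach _ VA okV ((q, f), s) w ((q', f'), s') -> f' != Some false ->
  if f == Some true then exists ts, w = flat ts
  else (w = [::] /\ f' = f) \/ exists t ts, w = Some t :: flat ts.
Proof.
elim: w => [|x w IH] q f s q' f' s' /=.
- case=> _ -> _ _; case: ifP => _; first by exists [::].
  by left.
- case=> [[[q1 f1] s1]] [Hs Hr] hf'.
  case: x Hs => [[a k]|] Hs.
  + move/stepV_letter: Hs => [hf [e _]]; subst f1.
    have := IH _ _ _ _ _ _ Hr hf'; move=> -[ts ->].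
    by rewrite (negbTE hf); right; exists (a, k), ts.
  + move/stepV_x: Hs => [-> [e _]]; subst f1.
    have := IH _ _ _ _ _ _ Hr hf'; rewrite /= => -[[_ e]|[t [ts ->]]].
    * by rewrite e in hf'.
    * by exists (t :: ts).
Qed.

End Cons.

Theorem lemma3p1 (Sigma : finType) (A : PDA Sigma) :
  is_DOCA A ->
  exists V : PDA (tsym Sigma),
    (forall w, vpa_lang V w -> exists ts : seq (Sigma * kind), w = interleave ts) /\
    (forall u : seq Sigma,
       pda_lang A u <->
       exists ts : seq (Sigma * kind),
         vpa_lang V (interleave ts) /\ u = [seq t.1 | t <- ts]).
Proof.
move=> _; exists (VA A); split.
- move=> w; rewrite /vpa_lang /accepts => -[[q0 f0] [[q f] [s [/andP [_ /eqP e0] [/andP [_ hf] Hr]]]]].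
  rewrite /= in e0; subst f0; have := shape Hr hf; rewrite /= => -[[-> _]|[t [ts ->]]].
  + by exists [::].
  + by exists (t :: ts).
- move=> u; split.
  + case=> q0 [q [s [hi [hf /reachA [ts [-> Hr]]]]]].
    exists ts; split=> //.
    case: ts Hr => [|t ts] Hr.
    * move: Hr => /= [e1 e2]; subst q s; exists (q0, None), (q0, None), [::].
      by rewrite /= hi hf.
    * exists (q0, None), (q, Some true), s.
      split; first by rewrite /= hi.
      split; first by rewrite /= hf.
      by apply/reachV_inter => //; exists q, s.
  + case=> ts [[[q0 f0] [[q f] [s [/andP [hi /eqP e0] [/andP [hf _] Hr]]]]] ->].
    rewrite /= in e0; subst f0; exists q0, q, s; split=> //; split=> //.
    apply/reachA; exists ts; split=> //.
    case: ts Hr => [|t ts] Hr.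
    * by move: Hr => /= [-> _ ->].
    * by move/reachV_inter: Hr => /(_ isT) [q' [s' [[-> _ ->] Hr]]].
Qed.
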